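(* Let $r,s,j$ be nonnegative integers with $j\le r$. Then $$X_+^{\,r+s-j}\,Y_+^{\,r-j}\,m_{1^j}(\mathbf{xy})\Big|_{\mathbf y=\mathbf x}=\sum_{j\le i\le r}\binom{i}{j}\binom{2(r-i)+s}{r-i}(r-j)!\,(r+s-j)!\;m_{2^i1^{2(r-i)+s}}(\mathbf x),$$ where $X_+=\sum_{i\ge1}(x_i-x_i^2\partial/\partial x_i)$, $Y_+=\sum_{i\ge1}(y_i-y_i^2\partial/\partial y_i)$ act on formal power series in $\mathbf x=(x_1,x_2,\dots)$, $\mathbf y=(y_1,y_2,\dots)$, and $m_{1^j}(\mathbf{xy})=\sum_{\beta\subset\mathbb N_{>0},|\beta|=j}\prod_{k\in\beta}x_ky_k$.
   Context: $m_\mu(\mathbf x)$ denotes the monomial symmetric function indexed by the partition $\mu$ (sum of all distinct monomials $x_{k_1}^{\mu_1}x_{k_2}^{\mu_2}\cdots$ with distinct indices); $2^i1^t$ is the partition with $i$ parts equal to $2$ and $t$ parts equal to $1$; $m_{1^0}=1$. *)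

(* Defs.v *)
From mathcomp Require Import all_boot all_algebra.
From mathcomp Require Import mpoly.
Set Implicit Arguments. Unset Strict Implicit. Unset Printing Implicit Defensive.
Import GRing.Theory.
Local Open Scope ring_scope.

(* The variables x_1..x_n, y_1..y_n are encoded as the 2n variables of
   {mpoly rat[n + n]}: x_k = 'X_(lshift n k), y_k = 'X_(rshift n k). *)

Definition xv (n : nat) (k : 'I_n) : {mpoly rat[n + n]} := 'X_(lshift n k).
Definition yv (n : nat) (k : 'I_n) : {mpoly rat[n + n]} := 'X_(rshift n k).

Definition Xplus (n : nat) (p : {mpoly rat[n + n]}) : {mpoly rat[n + n]} :=
  \sum_(i < n) (xv i * p - (xv i) ^+ 2 * p^`M(lshift n i)).

Definition Yplus (n : nat) (p : {mpoly rat[n + n]}) : {mpoly rat[n + n]} :=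
  \sum_(i < n) (yv i * p - (yv i) ^+ 2 * p^`M(rshift n i)).

Definition m1xy (n j : nat) : {mpoly rat[n + n]} :=
  \sum_(beta : {set 'I_n} | #|beta| == j) \prod_(k in beta) (xv k * yv k).

Definition diag_idx (n : nat) (k : 'I_(n + n)) : 'I_n :=
  match split k with inl i => i | inr i => i end.

Definition diag_subst (n : nat) : (n + n).-tuple {mpoly rat[n]} :=
  [tuple 'X_(diag_idx k) | k < n + n].

Definition eval_yx (n : nat) (p : {mpoly rat[n + n]}) : {mpoly rat[n]} :=
  p \mPo diag_subst n.

(* monomial symmetric function m_{2^i 1^t} in n variables: the sum of all
   distinct monomials having exactly i exponents equal to 2, exactly t
   exponents equal to 1, and all other exponents 0.  Such monomials are in
   bijection with exponent functions f : 'I_n -> {0,1,2} with these counts. *)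
Definition m21 (n i t : nat) : {mpoly rat[n]} :=
  \sum_(f : {ffun 'I_n -> 'I_3} |
          (#|[set k | val (f k) == 2%N]| == i) && (#|[set k | val (f k) == 1%N]| == t))
    \prod_(k < n) 'X_k ^+ val (f k).

(* Main.v *)
Require Import Defs.
From mathcomp Require Import all_boot all_algebra.
From mathcomp Require Import mpoly.
Set Implicit Arguments. Unset Strict Implicit. Unset Printing Implicit Defensive.
Import GRing.Theory.
Local Open Scope ring_scope.
From mathcomp Require Import zify.

Lemma dX (n : nat) (l i : 'I_n) : ('X_i : {mpoly rat[n]})^`M(l) = (i == l)%:R.
Proof.
rewrite mderivX mnm1E; case: eqVneq => [->|_]; last by rewrite scale0r.
have -> : (U_(l) - U_(l) = 0)%MM by apply/mnmP => k; rewrite !mnmE subnn.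
by rewrite mpolyX0 scale1r.
Qed.

Lemma dprod0 (N : nat) (l : 'I_N) (I : finType) (S : {pred I}) (g : I -> 'I_N) :
  (forall k, k \in S -> g k != l) ->
  (\prod_(k in S) ('X_(g k) : {mpoly rat[N]}))^`M(l) = 0.
Proof.
move=> H; apply: (big_ind (fun q : {mpoly rat[N]} => q^`M(l) = 0)).
- by rewrite -mpolyC1 mderivC.
- by move=> x y hx hy; rewrite mderivM hx hy mul0r mulr0 addr0.
- by move=> k kS; rewrite dX (negbTE (H k kS)).
Qed.

Definition px n (A : {set 'I_n}) : {mpoly rat[n + n]} := \prod_(k in A) xv k.
Definition py n (B : {set 'I_n}) : {mpoly rat[n + n]} := \prod_(k in B) yv k.

Lemma Xplus_add n p q : @Xplus n (p + q) = @Xplus n p + @Xplus n q.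
Proof.
rewrite /Xplus -big_split /=; apply: eq_bigr => i _.
by rewrite mderivD !mulrDr opprD addrACA.
Qed.

Lemma Yplus_add n p q : @Yplus n (p + q) = @Yplus n p + @Yplus n q.
Proof.
rewrite /Yplus -big_split /=; apply: eq_bigr => i _.
by rewrite mderivD !mulrDr opprD addrACA.
Qed.

Lemma Xplus_pxy n (A B : {set 'I_n}) :
  @Xplus n (px A * py B) = \sum_(i | i \notin A) px (i |: A) * py B.
Proof.
rewrite /Xplus [RHS]big_mkcond /=; apply: eq_bigr => i _.
have dB : (py B)^`M(lshift n i) = 0.
  by apply: dprod0 => k _; rewrite eq_rlshift.
case iA: (i \in A) => /=.
  rewrite /px (big_setD1 i iA) /= -mulrA.
  set q := _ * py B.
  have dq : q^`M(lshift n i) = 0.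
    rewrite /q mderivM dB mulr0 addr0.
    rewrite (dprod0 (g := fun k => lshift n k)) ?mul0r // => k.
    by rewrite !inE eq_lshift => /andP[].
  by rewrite mderivM dq mulr0 addr0 /xv dX eqxx mul1r expr2 mulrA subrr.
have dA : (px A)^`M(lshift n i) = 0.
  apply: (dprod0 (g := fun k => lshift n k)) => k kA.
  by rewrite eq_lshift; apply: contraTneq kA => ->; rewrite iA.
rewrite mderivM dA dB mul0r mulr0 addr0 mulr0 subr0.
by rewrite /px big_setU1 ?iA //= mulrA.
Qed.

Lemma Yplus_pxy n (A B : {set 'I_n}) :
  @Yplus n (px A * py B) = \sum_(i | i \notin B) px A * py (i |: B).
Proof.
rewrite /Yplus [RHS]big_mkcond /=; apply: eq_bigr => i _.
have dA : (px A)^`M(rshift n i) = 0.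
  by apply: dprod0 => k _; rewrite eq_lrshift.
case iB: (i \in B) => /=.
  rewrite /py (big_setD1 i iB) /= [px A * _]mulrCA.
  set q := px A * _.
  have dq : q^`M(rshift n i) = 0.
    rewrite /q mderivM dA mul0r add0r.
    rewrite (dprod0 (g := fun k : 'I_n => rshift n k)) ?mulr0 // => k.
    by rewrite !inE eq_rshift => /andP[].
  by rewrite mderivM dq mulr0 addr0 /yv dX eqxx mul1r expr2 mulrA subrr.
have dB : (py B)^`M(rshift n i) = 0.
  apply: (dprod0 (g := fun k : 'I_n => rshift n k)) => k kB.
  by rewrite eq_rshift; apply: contraTneq kB => ->; rewrite iB.
rewrite mderivM dA dB mul0r mulr0 addr0 mulr0 subr0.
by rewrite /py big_setU1 ?iB //= mulrCA.
Qed.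
Lemma iter_sets (V : zmodType) (I : finType) (T : V -> V) (f : {set I} -> V)
  (Tadd : forall x y, T (x + y) = T x + T y)
  (Tf : forall A, T (f A) = \sum_(i | i \notin A) f (i |: A)) m A :
  iter m T (f A) =
  (\sum_(E : {set I} | (#|E| == m) && (E \subset ~: A)) f (A :|: E)) *+ m`!.
Proof.
have T0 : T 0 = 0.
  by apply: (addrI (T 0)); rewrite -Tadd !addr0.
have Tsum : forall (J : Type) (r : seq J) (P : pred J) F,
    T (\sum_(i <- r | P i) F i) = \sum_(i <- r | P i) T (F i).
  by move=> J r P F; apply: big_morph.
have TMn : forall x k, T (x *+ k) = T x *+ k.
  by move=> x; elim=> [|k IH]; rewrite ?mulr0n // !mulrS Tadd IH.
elim: m => [|m IH].
  rewrite mulr1n (big_pred1 set0) ?setU0 // => E.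
  rewrite -[pred1 set0 E]/(E == set0) cards_eq0.
  have [->|_] := eqVneq E set0; last by [].
  by rewrite sub0set.
rewrite /= IH TMn Tsum factS mulrnA; congr (_ *+ _).
rewrite -sumrMnl.
under eq_bigr do rewrite Tf.
rewrite [RHS](eq_bigr (fun E : {set I} => \sum_(i in E) f (A :|: E))); last first.
  by move=> E /andP[/eqP <- _]; rewrite sumr_const.
rewrite !pair_big_dep /=.
rewrite [RHS](reindex_onto (fun p : {set I} * I => (p.2 |: p.1, p.2))
                      (fun p : {set I} * I => (p.1 :\ p.2, p.2))) /=; last first.
  by case=> E i /= /andP[_ iE]; rewrite setD1K.
apply: eq_big => [[E i]|[E i]] /=; last first.
  by move=> _; rewrite setUCA.
rewrite in_setU negb_or xpair_eqE eqxx andbT setU11 andbT subUset sub1set in_setC.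
case iE: (i \in E) => /=.
  have -> : i |: E = E by apply/setUidPr; rewrite sub1set.
  case: (E :\ i =P E) => [h|_]; last by rewrite !andbF.
  by have := setD11 i E; rewrite h iE.
rewrite setU1K ?iE // eqxx andbT cardsU1 iE add1n eqSS.
by case: (#|E| == m); case: (E \subset ~: A); case: (i \notin A).
Qed.
Ltac bcase := intros; repeat match goal with H : is_true true -> _ |- _ => specialize (H isT) end;
  simpl in *; try congruence; try done.

Section Count.
Local Open Scope nat_scope.
Variable n : nat.
Notation S3 := ({set 'I_n} * ({set 'I_n} * {set 'I_n}))%type.

Definition phi (t : S3) : {ffun 'I_n -> 'I_3} :=
  [ffun k => inord ((k \in t.1 :|: t.2.2) + (k \in t.1 :|: t.2.1))].

Lemma phiE t k : val (phi t k) = ((k \in t.1 :|: t.2.2) + (k \in t.1 :|: t.2.1))%N.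
Proof. by rewrite ffunE /= inordK //; case: (_ \in _); case: (_ \in _). Qed.

Definition Pt (r s j : nat) (t : S3) :=
  (#|t.1| == j) && (((#|t.2.1| == r - j) && (t.2.1 \subset ~: t.1)) &&
                    ((#|t.2.2| == r + s - j) && (t.2.2 \subset ~: t.1))).

Definition c2 (f : {ffun 'I_n -> 'I_3}) := [set k | val (f k) == 2].
Definition c1 (f : {ffun 'I_n -> 'I_3}) := [set k | val (f k) == 1].

Lemma count_fiber (r s j : nat) (f : {ffun 'I_n -> 'I_3}) : (j <= r)%N ->
  #|[set t | Pt r s j t && (phi t == f)]| =
  (if (j <= #|c2 f| <= r) && (#|c1 f| == (r - #|c2 f|).*2 + s)
   then 'C(#|c2 f|, j) * 'C(#|c1 f|, r - #|c2 f|) else 0)%N.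
Proof.
move=> hjr.
set I2 := c2 f; set I1 := c1 f.
have I12 : forall k, k \in I2 -> k \notin I1.
  by move=> k; rewrite !inE => /eqP ->.
pose psi (p : {set 'I_n} * {set 'I_n}) : S3 :=
  (p.1, ((I2 :\: p.1) :|: (I1 :\: p.2), (I2 :\: p.1) :|: p.2)).
pose Q := [set p : {set 'I_n} * {set 'I_n} | [&& p.1 \subset I2, #|p.1| == j,
   p.2 \subset I1, #|(I2 :\: p.1) :|: (I1 :\: p.2)| == r - j &
   #|(I2 :\: p.1) :|: p.2| == r + s - j]].
have mI2 : forall k, (k \in I2) = (val (f k) == 2) by move=> k; rewrite /I2 /c2 inE.
have mI1 : forall k, (k \in I1) = (val (f k) == 1) by move=> k; rewrite /I1 /c1 inE.
have SQ : [set t | Pt r s j t && (phi t == f)] = psi @: Q.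
  apply/setP => t; apply/idP/idP.
    rewrite inE => /andP[Ht /eqP Hf]; apply/imsetP.
    move: t Ht Hf => [b [D E]].
    rewrite /Pt -[(b, (D, E)).1]/b -[(b, (D, E)).2.1]/D -[(b, (D, E)).2.2]/E.
    move=> /and3P[cb /andP[cD sD] /andP[cE sE]] Hf.
    have vk : forall k, val (f k) = ((k \in b :|: E) + (k \in b :|: D))%N.
      by move=> k; rewrite -Hf phiE.
    have eD : D = (I2 :\: b) :|: (I1 :\: (E :&: I1)).
      apply/setP => k; rewrite !in_setU !in_setD !in_setI ?mI2 ?mI1 vk !in_setU.
      move: (subsetP sD k) (subsetP sE k); rewrite !in_setC.
      by case: (k \in b); case: (k \in D); case: (k \in E); bcase.
    have eE : E = (I2 :\: b) :|: (E :&: I1).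
      apply/setP => k; rewrite !in_setU !in_setD !in_setI ?mI2 ?mI1 vk !in_setU.
      move: (subsetP sD k) (subsetP sE k); rewrite !in_setC.
      by case: (k \in b); case: (k \in D); case: (k \in E); bcase.
    exists (b, E :&: I1); last by rewrite /psi -[(b, E :&: I1).1]/b -[(b, E :&: I1).2]/(E :&: I1) -eD -eE.
    rewrite inE -[(b, E :&: I1).1]/b -[(b, E :&: I1).2]/(E :&: I1) -eD -eE cb cD cE subsetIr !andbT.
    apply/subsetP => k kb; rewrite mI2 vk !in_setU kb.
    done.
  move=> /imsetP[[b e] hq ->]; move: hq.
  rewrite /Q inE -[(b, e).1]/b -[(b, e).2]/e => /and5P[sb cb se cD cE].
  rewrite inE; apply/andP; split.
    rewrite /Pt /psi -[(b, _).1]/b -[(b, _).2.1]/(I2 :\: b :|: I1 :\: e) -[(b, _).2.2]/(I2 :\: b :|: e).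
    rewrite cb cD cE /=.
    apply/andP; split; apply/subsetP => k; rewrite in_setC !in_setU !in_setD.
      move: (subsetP sb k); rewrite ?mI2 ?mI1.
      by case: (k \in b); case: (k \in e); case: (f k) => [[|[|[|v]]] hv]; bcase.
    move: (subsetP sb k) (subsetP se k); rewrite ?mI2 ?mI1.
    by case: (k \in b); case: (k \in e); case: (f k) => [[|[|[|v]]] hv]; bcase.
  apply/eqP/ffunP => k; apply/val_inj; rewrite phiE /psi.
  rewrite /=.
  rewrite !in_setU !in_setD ?mI2 ?mI1.
  move: (subsetP sb k) (subsetP se k); rewrite ?mI2 ?mI1.
  by case: (f k) => [[|[|[|v]]] hv]; case: (k \in b); case: (k \in e); bcase.
have injpsi : {in Q &, injective psi}.
  move=> [b e] [b' e']; rewrite /Q !inE -[(b, e).1]/b -[(b, e).2]/e -[(b', e').1]/b' -[(b', e').2]/e'.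
  move=> /and5P[_ _ se _ _] /and5P[_ _ se' _ _] [eb _ eE]; subst b'.
  congr pair; apply/setP => k; move/setP/(_ k): eE; rewrite !in_setU !in_setD.
  have nI2 : k \in I1 -> (k \in I2) = false.
    by move=> kI1; apply/negbTE/negP => /I12; rewrite kI1.
  move: (subsetP se k) (subsetP se' k).
  case ke: (k \in e); case ke': (k \in e') => //=; rewrite ?orbT ?orbF.
    by move=> /(_ isT) /nI2 -> _; rewrite andbF.
  by move=> _ /(_ isT) /nI2 ->; rewrite andbF.
rewrite SQ card_in_imset //.
have cU : forall X Y : {set 'I_n}, X \subset I2 -> Y \subset I1 -> #|X :|: Y| = (#|X| + #|Y|)%N.
  move=> X Y sX sY; rewrite cardsU.
  have -> : X :&: Y = set0.
    apply/setP=> k; rewrite !inE; apply/negbTE/negP => /andP[kX kY].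
    by have := I12 k (subsetP sX k kX); rewrite (subsetP sY k kY).
  by rewrite cards0 subn0.
have cD : forall X Y : {set 'I_n}, Y \subset X -> #|X :\: Y| = (#|X| - #|Y|)%N.
  by move=> X Y sYX; rewrite cardsD (setIidPr sYX).
have sD : forall X Y : {set 'I_n}, X :\: Y \subset X.
  by move=> X Y; apply/subsetP=> k; rewrite inE => /andP[].
case C : ((j <= #|I2| <= r) && (#|I1| == (r - #|I2|).*2 + s))%N.
  move: C => /andP[/andP[hj hr] /eqP h1]; rewrite -muln2 in h1.
  have -> : Q = setX [set b : {set 'I_n} | b \subset I2 & #|b| == j]
                     [set e : {set 'I_n} | e \subset I1 & #|e| == r + s - #|I2|]%N.
    apply/setP => -[b e]; rewrite !inE.
    rewrite -[(b, e).1]/b -[(b, e).2]/e.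
    case sb: (b \subset I2); case se: (e \subset I1); rewrite ?andbF ?andFb // ?andTb ?andbT.
    rewrite cU ?sD // cU ?sD // !cD //.
    have := subset_leq_card sb; have := subset_leq_card se.
    move=> le1 le2.
    move: le1 le2 h1 hj hr; set cb := #|b|; set ce := #|e|; set c2' := #|I2|; set c1' := #|I1| => le1 le2 h1 hj hr.
    apply/idP/idP.
      move=> /and3P[/eqnP h2 /eqnP h3 /eqnP h4]; apply/andP; split; lia.
    by move=> /andP[/eqnP h2 /eqnP h3]; apply/and3P; split; lia.
  rewrite cardsX !cards_draws.
  move: h1 hr hj; set c2' := #|I2|; set c1' := #|I1| => h1 hr hj.
  have -> : (r + s - c2' = c1' - (r - c2'))%N by lia.
  by rewrite bin_sub //; lia.
apply/eqP; rewrite cards_eq0; apply/eqP/setP => -[b e]; rewrite !inE.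
rewrite -[(b, e).1]/b -[(b, e).2]/e.
apply/negbTE/negP => /and5P[sb /eqnP cb se c2 c3].
move: c2 c3; rewrite cU ?sD // cU ?sD // !cD // => /eqnP c2 /eqnP c3.
have := subset_leq_card sb; have := subset_leq_card se => le1 le2.
move: C cb c2 c3 le1 le2.
set cb' := #|b|; set ce := #|e|; set c2' := #|I2|; set c1' := #|I1|.
move=> C cb c2 c3 le1 le2.
move: C; case: (leqP j c2') => ?; case: (leqP c2' r) => ? /=;
  try lia.
Qed.
End Count.
Local Open Scope ring_scope.
Lemma iter_add (V : zmodType) (T : V -> V)
  (Tadd : forall x y, T (x + y) = T x + T y) m x y :
  iter m T (x + y) = iter m T x + iter m T y.
Proof. by elim: m => //= m ->; rewrite Tadd. Qed.

Lemma iter_sum (V : zmodType) (T : V -> V)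
  (Tadd : forall x y, T (x + y) = T x + T y) m (I : Type) (r : seq I) (P : pred I) F :
  iter m T (\sum_(i <- r | P i) F i) = \sum_(i <- r | P i) iter m T (F i).
Proof.
have T0 : iter m T 0 = 0.
  by apply: (addrI (iter m T 0)); rewrite -iter_add // !addr0.
by apply: big_morph => //; apply: iter_add.
Qed.

Lemma iter_Mn (V : zmodType) (T : V -> V)
  (Tadd : forall x y, T (x + y) = T x + T y) m x k :
  iter m T (x *+ k) = iter m T x *+ k.
Proof.
elim: k => [|k IH]; last by rewrite !mulrS iter_add // IH.
by rewrite !mulr0n; apply: (addrI (iter m T 0)); rewrite -iter_add // !addr0.
Qed.

Lemma diag_l n (k : 'I_n) : diag_idx (lshift n k) = k.
Proof.
rewrite /diag_idx; case: splitP => [i /= hi|i /= hi]; first exact: val_inj.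
by have := ltn_ord k; rewrite hi ltnNge leq_addr.
Qed.

Lemma diag_r n (k : 'I_n) : diag_idx (rshift n k) = k.
Proof.
rewrite /diag_idx; case: splitP => [i /= hi|i /= hi].
  by have := ltn_ord i; rewrite -hi ltnNge leq_addr.
by apply: val_inj; move/eqP: hi; rewrite eqn_add2l => /eqP.
Qed.

Lemma eval_pxy n (A B : {set 'I_n}) :
  eval_yx (px A * py B) = \prod_(k < n) 'X_k ^+ ((k \in A) + (k \in B))%N.
Proof.
rewrite /eval_yx rmorphM /= /px /py !rmorph_prod /=.
rewrite (eq_bigr (fun k => 'X_k)); last first.
  by move=> k _; rewrite /xv comp_mpolyXU -tnth_nth /diag_subst tnth_mktuple diag_l.
rewrite [X in _ * X](eq_bigr (fun k => 'X_k)); last first.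
  by move=> k _; rewrite /yv comp_mpolyXU -tnth_nth /diag_subst tnth_mktuple diag_r.
rewrite !(big_mkcond (fun k => k \in _)) -big_split /=; apply: eq_bigr => k _.
by case: (k \in A); case: (k \in B); rewrite ?mulr1 ?mul1r ?expr0 ?expr1 // expr2.
Qed.

Lemma sum_nat_pick (V : zmodType) (lo hi a : nat) (B : nat -> bool) (G : nat -> V) :
  \sum_(lo <= i < hi) (if (a == i) && B i then G i else 0) =
  if (lo <= a < hi)%N && B a then G a else 0.
Proof.
rewrite (eq_bigr (fun i => if i == a then (if B i then G i else 0) else 0)); last first.
  by move=> i _; rewrite eq_sym; case: eqP.
rewrite -big_mkcond big_nat1_eq.
by case: (lo <= a < hi)%N.
Qed.

Definition mon n (f : {ffun 'I_n -> 'I_3}) : {mpoly rat[n]} := \prod_(k < n) 'X_k ^+ val (f k).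

Unset Implicit Arguments.
Theorem mainTheorem6 (n r s j : nat) (hjr : (j <= r)%N) :
  eval_yx (iter (r + s - j) (@Xplus n) (iter (r - j) (@Yplus n) (m1xy n j)))
  = \sum_(j <= i < r.+1)
      (('C(i, j) * 'C((r - i).*2 + s, r - i) * (r - j)`! * (r + s - j)`!)%:R
         * m21 n i ((r - i).*2 + s)).
Proof.
have -> : m1xy n j = \sum_(b : {set 'I_n} | #|b| == j) px b * py b.
  by apply: eq_bigr => b _; rewrite /px /py big_split.
rewrite iter_sum; last exact: Yplus_add.
rewrite iter_sum; last exact: Xplus_add.
under eq_bigr => b _.
  rewrite (@iter_sets _ _ (@Yplus n) (fun B => px b * py B)); last 2 first.
  - exact: Yplus_add.
  - by move=> B; rewrite Yplus_pxy.
  rewrite iter_Mn; last exact: Xplus_add.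
  rewrite iter_sum; last exact: Xplus_add.
  under eq_bigr => D _.
    rewrite (@iter_sets _ _ (@Xplus n) (fun A => px A * py (b :|: D))); last 2 first.
    - exact: Xplus_add.
    - by move=> A; rewrite Xplus_pxy.
    over.
  cbv beta; rewrite -sumrMnl; under eq_bigr do rewrite -mulrnA -sumrMnl.
  over.
rewrite /eval_yx raddf_sum /=.
under eq_bigr => b _.
  rewrite raddf_sum /=.
  under eq_bigr => D _.
    rewrite raddf_sum /=.
    under eq_bigr => E _ do rewrite raddfMn /= -/(eval_yx _) eval_pxy.
    over.
  over.
cbv beta.
under eq_bigr => b _ do rewrite pair_big_dep /=.
rewrite pair_big_dep /= sumrMnl.
rewrite (eq_bigl (fun t => Pt r s j t)) //.
rewrite (eq_bigr (fun t => mon (phi t))); last first.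
  by move=> t _; rewrite /mon; apply: eq_bigr => k _; rewrite phiE.
rewrite (partition_big (@phi n) predT) //.
rewrite -sumrMnl.
under [RHS]eq_bigr => i _ do rewrite /m21 big_mkcond mulr_sumr.
rewrite [RHS]exchange_big /=.
apply: eq_bigr => f _.
rewrite (eq_bigr (fun _ => mon f)); last by move=> t /andP[_ /eqP ->].
rewrite sumr_const.
under [RHS]eq_bigr => i _ do rewrite (fun_if (fun x => _ * x)) mulr0.
rewrite sum_nat_pick.
have -> : #|[pred t | Pt r s j t && (phi t == f)]| = #|[set t | Pt r s j t && (phi t == f)]|.
  by apply: eq_card => t; rewrite inE.
rewrite count_fiber // -/(c2 f) -/(c1 f) -/(mon f) ltnS.
case: ifP => [/andP[/andP[h1 h2] /eqP h3]|_]; last by rewrite mulr0n mul0rn.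
rewrite h3 -mulrnA mulr_natl; congr (_ *+ _).
by rewrite -!mulnA (mulnC (r + s - j)`!).
Qed.
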